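(* Let $V$ be a finite dimensional real vector space and $f_1, f_2 \in C^2(V)$ be functions such that $d^2 f_1(x)$ and $d^2 f_2(x)$ are positive definite for all $x \in V$. Then $d(f_1 + f_2)(V) = df_1(V) + df_2(V)$ (Minkowski sum). *)

(* Defs.v *)
(* V = 'rV[R]_n, R : realType (a finite-dimensional
   real vector space, up to linear isomorphism). *)
From HB Require Import structures.
From mathcomp Require Import all_boot all_order all_algebra.
From mathcomp Require Import all_classical all_reals all_analysis.
Set Implicit Arguments. Unset Strict Implicit. Unset Printing Implicit Defensive.
Import Order.TTheory GRing.Theory Num.Theory.
Import numFieldNormedType.Exports.
Local Open Scope classical_set_scope.
Local Open Scope ring_scope.

Definition d2 (R : realType) (n : nat) (f : 'rV[R]_n -> R) (x u v : 'rV[R]_n) : R :=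
  'D_u (fun y => 'd f y v) x.

Definition C2 (R : realType) (n : nat) (f : 'rV[R]_n -> R) : Prop :=
  (forall x, differentiable f x) /\
  (forall v x, differentiable (fun y => 'd f y v) x) /\
  (forall u v, continuous (fun x => d2 f x u v)).

Definition hess_posdef (R : realType) (n : nat) (f : 'rV[R]_n -> R) (x : 'rV[R]_n) : Prop :=
  forall v : 'rV[R]_n, v != 0 -> 0 < d2 f x v v.

Definition diff_image (R : realType) (n : nat) (f : 'rV[R]_n -> R) : set ('rV[R]_n -> R) :=
  [set (fun v => 'd f x v) | x in [set: 'rV[R]_n]].

Definition minkowski_sum (R : realType) (n : nat) (A B : set ('rV[R]_n -> R)) :
  set ('rV[R]_n -> R) := [set a \+ b | a in A & b in B].

(* Main.v *)
Require Import Defs.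
From HB Require Import structures.
From mathcomp Require Import all_boot all_order all_algebra.
From mathcomp Require Import all_classical all_reals all_analysis.
From mathcomp Require Import ring lra.
Import Order.TTheory GRing.Theory Num.Theory.
Import numFieldNormedType.Exports.
Local Open Scope classical_set_scope.
Local Open Scope ring_scope.

Section S.
Variables (R : realType) (n : nat).
Notation V := 'rV[R]_n.

Lemma line_derive (F : V -> R) (x v : V) (t : R) :
  differentiable F (x + t *: v) ->
  is_derive t 1 (fun s => F (x + s *: v)) ('d F (x + t *: v) v).
Proof.
move=> dF.
have E : (fun h : R => h^-1 *: (((fun s => F (x + s *: v)) \o shift t) (h *: 1) - F (x + t *: v)))
   = (fun h : R => h^-1 *: ((F \o shift (x + t *: v)) (h *: v) - F (x + t *: v))).
  apply/funext => h /=; congr (_ *: (F _ - _)).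
  by rewrite /= -[h%:A]/(h * 1) mulr1 scalerDl addrCA.
split.
  by rewrite /derivable E; exact: diff_derivable.
by rewrite -deriveE // /derive E.
Qed.

Lemma mvt_line (F : V -> R) (x v : V) (t s : R) :
  (forall y, differentiable F y) -> t < s ->
  exists2 c, c \in `]t, s[ &
    F (x + s *: v) - F (x + t *: v) = 'd F (x + c *: v) v * (s - t).
Proof.
move=> dF ts.
apply: (@MVT _ (fun s => F (x + s *: v)) (fun c => 'd F (x + c *: v) v)) => //.
  by move=> c _; exact: line_derive.
apply: derivable_within_continuous => c _.
by have [] := @line_derive F x v c (dF _).
Qed.

Lemma dmono (f : V -> R) (x v : V) (t s : R) : C2 f -> (forall y, hess_posdef f y) ->
  v != 0 -> t < s -> 'd f (x + t *: v) v < 'd f (x + s *: v) v.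
Proof.
move=> [d1 [d2' _]] hp v0 ts.
have [c _ E] := @mvt_line _ x v t s (d2' v) ts.
rewrite -subr_gt0 E mulr_gt0 ?subr_gt0 //.
rewrite -deriveE //; exact: hp.
Qed.

Lemma bnd_compact (A : set V) rho : (forall x, A x -> `|x| <= rho) -> closed A -> compact A.
Proof.
move=> Ab Ac; apply: bounded_closed_compact => //.
exists rho; split; first exact: num_real.
by move=> M HM x /Ab Ax; apply: le_trans Ax (ltW HM).
Qed.

Lemma mvt01 (f : V -> R) (a u : V) (t s : R) : C2 f -> t < s ->
  exists2 c, t < c < s &
    f (a + s *: u) - f (a + t *: u) = 'd f (a + c *: u) u * (s - t).
Proof.
move=> [d1 _] ts; have [c cts E] := @mvt_line f a u t s d1 ts.
by exists c => //; move: cts; rewrite in_itv.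
Qed.

Lemma k_pos (f : V -> R) (a u : V) : C2 f -> (forall y, hess_posdef f y) ->
  u != 0 -> 0 < f (a + u) - f a - 'd f a u.
Proof.
move=> Cf hp u0; have [c /andP[c0 c1] E] := @mvt01 f a u 0 1 Cf ltr01.
rewrite scale1r scale0r addr0 subr0 mulr1 in E.
rewrite E subr_gt0; have := @dmono f a u 0 c Cf hp u0 c0.
by rewrite scale0r addr0.
Qed.

Lemma k_ge0 (f : V -> R) (a u : V) : C2 f -> (forall y, hess_posdef f y) ->
  0 <= f (a + u) - f a - 'd f a u.
Proof.
move=> Cf hp; have [->|u0] := eqVneq u 0.
  by rewrite addr0 subrr linear0 subr0.
exact/ltW/k_pos.
Qed.

Lemma key (r fu fa fr L D1 D2 : R) : fu - fa = D1 -> fr - fu = D2*(r-1) -> (r-1)*D1 <= (r-1)*D2 -> r*(fu - fa - L) <= fr - fa - r*L.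
Proof. move=> E1 E2 H.
have -> : fr = D2 * (r-1) + fu by rewrite -E2 subrK.
have -> : fu = D1 + fa by rewrite -E1 subrK.
rewrite -subr_ge0. have -> : D2 * (r - 1) + (D1 + fa) - fa - r * L - r * (D1 + fa - fa - L) = (r-1)*D2 - (r-1)*D1 by ring.
by rewrite subr_ge0.
Qed.

Lemma k_grow (f : V -> R) (a u : V) (r : R) : C2 f -> (forall y, hess_posdef f y) ->
  1 <= r -> r * (f (a + u) - f a - 'd f a u) <= f (a + r *: u) - f a - 'd f a (r *: u).
Proof.
move=> Cf hp; rewrite le_eqVlt => /orP[/eqP <-|r1].
  by rewrite scale1r mul1r.
have [->|u0] := eqVneq u 0.
  by rewrite scaler0 addr0 subrr linear0 subr0 mulr0.
have [c1 /andP[c10 c11] E1] := @mvt01 f a u 0 1 Cf ltr01.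
have [c2 /andP[c21 c2r] E2] := @mvt01 f a u 1 r Cf r1.
rewrite scale1r scale0r addr0 subr0 mulr1 in E1.
rewrite scale1r in E2.
have D := @dmono f a u c1 c2 Cf hp u0 (lt_trans c11 c21).
have LZ : 'd f a (r *: u) = r * 'd f a u by rewrite linearZ.
rewrite LZ; apply: (@key r _ _ _ _ _ _ E1 E2).
by apply: ler_wpM2l; [rewrite subr_ge0 ltW | exact: ltW].
Qed.

Lemma kcont (f : V -> R) (a : V) : C2 f ->
  continuous (fun u => f (a + u) - f a - 'd f a u).
Proof.
move=> [d1 _].
have -> : (fun u => f (a + u) - f a - 'd f a u) =
  ((f \o (cst a + id)) - cst (f a)) - ('d f a : V -> R) by apply/funext.
move=> u; apply: continuousB; last exact: (diff_continuous (d1 a)).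
apply: continuousB; last exact: cst_continuous.
apply: continuous_comp; last exact: differentiable_continuous.
apply: continuousD; [exact: cst_continuous | exact: cvg_id].
Qed.

Lemma norm_decomp (w : V) : 0 < `|w| -> `|(`|w|^-1 *: w)| = 1 /\ w = `|w| *: (`|w|^-1 *: w).
Proof.
move=> w0; split.
  by rewrite normrZ normrV ?unitfE ?gt_eqF // normr_id mulVf // gt_eqF.
by rewrite scalerA divff ?scale1r // gt_eqF.
Qed.

Lemma coerc (f : V -> R) (a : V) : C2 f -> (forall y, hess_posdef f y) ->
  exists2 d, 0 < d & forall w, d * (`|w| - 1) <= f (a + w) - f a - 'd f a w.
Proof.
move=> Cf hp.
set k := fun u => f (a + u) - f a - 'd f a u.
have kc : continuous k by exact: kcont.
pose S := [set u : V | `|u| = 1].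
have small d w : 0 < d -> `|w| <= 1 -> d * (`|w| - 1) <= k w.
  move=> d0 w1; apply: le_trans (@k_ge0 f a w Cf hp).
  by rewrite pmulr_rle0 // subr_le0.
case: (pselect (S !=set0)) => [S0|S0].
  have cS : compact S.
    apply: (@bnd_compact _ 1); first by move=> x ->.
    have -> : S = (Num.norm : V -> R) @^-1` [set x | x = 1] by [].
    apply: preimage_closed; [move=> x _; exact: norm_continuous | exact: closed_eq].
  have [c Sc cmin] := EVT_min_rV S0 cS (continuous_subspaceT kc).
  have c0 : c != 0 by rewrite -normr_eq0 (set_mem Sc) oner_neq0.
  have kc0 : 0 < k c by exact: k_pos.
  exists (k c) => // w.
  have [w1|w1] := leP `|w| 1; first exact: small.
  have w0 : 0 < `|w| by apply: lt_trans w1.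
  have [Su E] := @norm_decomp w w0.
  rewrite /k [in X in _ <= X]E.
  apply: le_trans (@k_grow f a _ _ Cf hp (ltW w1)).
  have : k c <= k (`|w|^-1 *: w) by apply: cmin; apply: mem_set.
  rewrite /k => H.
  apply: le_trans (_ : `|w| * k c <= _); last by rewrite ler_wpM2l.
  by rewrite mulrC ler_pM2r //; lra.
exists 1 => // w.
have [w1|w1] := leP `|w| 1; first exact: small.
have w0 : 0 < `|w| by apply: lt_trans w1.
have [Su _] := @norm_decomp w w0.
by exfalso; apply: S0; exists (`|w|^-1 *: w).
Qed.

Lemma exists_min (G : V -> R) (a : V) (C d : R) : continuous G -> 0 < d ->
  (forall x, C + d * (`|x - a| - 1) <= G x) ->
  exists m, forall x, G m <= G x.
Proof.
move=> Gc d0 HG.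
pose rho := `|a| + 1 + `|G 0 - C| / d.
pose B := [set x : V | `|x| <= rho].
have rho0 : 0 <= rho.
  rewrite /rho; have := normr_ge0 a; have := divr_ge0 (normr_ge0 (G 0 - C)) (ltW d0); lra.
have B0 : B 0 by rewrite /B /= normr0.
have cB : compact B.
  apply: (@bnd_compact _ rho); first by [].
  have -> : B = (Num.norm : V -> R) @^-1` [set x | x <= rho] by [].
  apply: preimage_closed; [move=> x _; exact: norm_continuous | exact: closed_le].
have [m Bm mmin] := EVT_min_rV (ex_intro _ 0 B0) cB (continuous_subspaceT Gc).
exists m => x.
have [xB|xB] := leP `|x| rho; first by apply: mmin; apply: mem_set.
apply: le_trans (mmin 0 (mem_set B0)) _.
apply: ltW; apply: lt_le_trans (HG x).
have h1 : `|x| - `|a| <= `|x - a| by rewrite lerBlDr -{1}(subrK a x) ler_normD.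
have h2 : G 0 - C <= `|G 0 - C| by exact: ler_norm.
have h3 : `|G 0 - C| < d * (`|x| - `|a| - 1).
  rewrite -ltr_pdivrMl // mulrC; move: xB; rewrite /rho; lra.
have h4 : d * (`|x| - `|a| - 1) <= d * (`|x - a| - 1).
  by apply: ler_wpM2l; [exact: ltW | lra].
lra.
Qed.
End S.

Lemma key2 (R : realDomainType) (f0 f3 L0 L3 f4 f5 L4 L5 m : R) :
  m <= f0 - f4 - (L0 - L4) -> 0 <= f3 - f5 - (L3 - L5) ->
  f4 - L4 + (f5 - L5) + m <= f0 + f3 - L0 - L3.
Proof. move=> *; lra. Qed.

Lemma key3 (R : ringType) (x y p q : R) : x + y - p - q = 0 -> x + y = p + q.
Proof. by move=> /eqP; rewrite -addrA -opprD subr_eq0 => /eqP. Qed.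

Theorem lemma1p19 (R : realType) (n : nat) (f1 f2 : 'rV[R]_n -> R) :
  C2 f1 -> C2 f2 ->
  (forall x, hess_posdef f1 x) -> (forall x, hess_posdef f2 x) ->
  diff_image (f1 \+ f2) = minkowski_sum (diff_image f1) (diff_image f2).
Proof.
move=> C1 C2' hp1 hp2.
have d1 := C1.1; have d2 := C2'.1.
have dsum x : ('d (f1 \+ f2) x : 'rV[R]_n -> R) = 'd f1 x \+ 'd f2 x.
  exact: diffD.
apply/seteqP; split.
  move=> _ [x _ <-]; exists (fun v => 'd f1 x v); first by exists x.
  exists (fun v => 'd f2 x v); first by exists x.
  by apply/funext => v; rewrite /= dsum.
move=> _ [_ [a _ <-] [_ [b _ <-] <-]].
pose L1 := ('d f1 a : 'rV[R]_n -> R).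
pose L2 := ('d f2 b : 'rV[R]_n -> R).
pose G := f1 + f2 - L1 - L2.
have L1c : continuous L1 by exact: diff_continuous.
have L2c : continuous L2 by exact: diff_continuous.
have dG x : differentiable G x.
  apply: differentiableB; last exact: (@linear_differentiable _ _ _ ('d f2 b) x L2c).
  apply: differentiableB; last exact: (@linear_differentiable _ _ _ ('d f1 a) x L1c).
  exact: differentiableD (d1 x) (d2 x).
have Gc : continuous G by move=> x; exact: differentiable_continuous.
have [d d0 Hd] := @coerc _ _ f1 a C1 hp1.
pose C := f1 a - L1 a + (f2 b - L2 b).
have HG x : C + d * (`|x - a| - 1) <= G x.
  have h1 := Hd (x - a).
  have e1 : f1 (a + (x - a)) = f1 x by rewrite addrC subrK.
  have e2 : 'd f1 a (x - a) = L1 x - L1 a by rewrite /L1 /L2 raddfB.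
  rewrite e1 e2 in h1.
  have h2 := @k_ge0 _ _ f2 b (x - b) C2' hp2.
  have e3 : f2 (b + (x - b)) = f2 x by rewrite addrC subrK.
  have e4 : 'd f2 b (x - b) = L2 x - L2 b by rewrite /L1 /L2 raddfB.
  rewrite e3 e4 in h2.
  have eG : G x = f1 x + f2 x - L1 x - L2 x by [].
  rewrite eG /C.
  move: h1 h2; move: (f1 x) (f2 x) (L1 x) (L2 x) (f1 a) (f2 b) (L1 a) (L2 b) (d * _).
  exact: key2.
have [m mmin] := @exists_min _ _ G a C d Gc d0 HG.
exists m; first by [].
apply/funext => v.
have Dm : is_derive (0:R) (1:R) (fun s : R => G (m + s *: v)) 0.
  apply: (@derive1_at_min _ _ (-1) 1).
  - by rewrite ge0_cp // ler01.
  - by move=> t _; have [] := @line_derive _ _ G m v t (dG _).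
  - by rewrite in_itv /= ltrN10 ltr01.
  - by move=> t _; rewrite scale0r addr0.
have Dm' := @line_derive _ _ G m v 0 (dG _).
have E : 'd G (m + 0 *: v) v = 0.
  by rewrite -(@derive_val _ _ _ _ _ _ _ Dm') (@derive_val _ _ _ _ _ _ _ Dm).
rewrite scale0r addr0 in E.
have dL1 : forall x, differentiable L1 x := fun x => @linear_differentiable _ _ _ ('d f1 a) x L1c.
have dL2 : forall x, differentiable L2 x := fun x => @linear_differentiable _ _ _ ('d f2 b) x L2c.
have dS : differentiable (f1 + f2) m := differentiableD (d1 m) (d2 m).
have dA : differentiable (f1 + f2 - L1) m := differentiableB dS (dL1 m).
rewrite /G (diffB dA (dL2 m)) in E.
rewrite (diffB dS (dL1 m)) (diffD (d1 m) (d2 m)) in E.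
have e1 : 'd L1 m v = L1 v := congr1 (fun g => g v) (@diff_lin _ _ _ ('d f1 a) m L1c).
have e2 : 'd L2 m v = L2 v := congr1 (fun g => g v) (@diff_lin _ _ _ ('d f2 b) m L2c).
have E' : 'd f1 m v + 'd f2 m v - L1 v - L2 v = 0 by rewrite -e1 -e2; exact: E.
have H := @key3 _ _ _ _ _ E'.
exact: (etrans (congr1 (fun g => g v) (dsum m)) H).
Qed.
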